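(* Let $V$ be a finite vertex set with $|V|=n$ and $\{k_u\}_{u\in V}$ a degree sequence with $k_u\ge 1$ for all $u$, such that some vertex has odd degree and some vertex $v$ has $k_v-(n-1)$ negative or odd. Then every multiloop-graph $G$ on $V$ with degree sequence $\{k_u\}$ can be transformed, by a finite sequence of double edge swaps all of whose intermediate graphs are multiloop-graphs with degree sequence $\{k_u\}$, into a multiloop-graph having exactly $\lfloor k_u/2\rfloor$ self-loops at every vertex $u$ (so that its non-loop edges form a simple graph with degree sequence $\{k_u \bmod 2\}$, i.e. a perfect matching on the odd-degree vertices).
   Context: All graphs are on a fixed labeled vertex set $V$; a graph is a multiset $E$ of unordered pairs $(u,v)$ with $u,v\in V$, where a pair $(u,u)$ is a self-loop. The degree $k_u$ of $u$ is the number of edge-endpoints at $u$, so each self-loop at $u$ contributes $2$ to $k_u$. A multiloop-graph is such a graph in which self-loops may occur with any multiplicity but every non-loop edge $(u,v)$, $u\ne v$, occurs at most once. A double edge swap $(u,v),(x,y)\leadsto(u,x),(v,y)$ removes one copy of each of two edge occurrences $(u,v)$ and $(x,y)$ (loops allowed) and adds the edges $(u,x)$ and $(v,y)$; either pairing of endpoints may be used. It preserves the degree sequence. *)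

(* Defs.v *)
From Stdlib Require Import Relations.
From mathcomp Require Import all_boot.
Set Implicit Arguments. Unset Strict Implicit. Unset Printing Implicit Defensive.

(* A graph on the vertex set V is a finite multiset of unordered pairs,
   represented by a list of ordered pairs; the orientation and the order of
   the list are irrelevant, as only [emult] and [deg] are ever observed. *)
Definition graph (V : finType) := seq (V * V).

Definition emult (V : finType) (G : graph V) (a b : V) : nat :=
  count (fun e => (e == (a, b)) || (e == (b, a))) G.

Definition geq (V : finType) (G H : graph V) : Prop :=
  forall a b, emult G a b = emult H a b.

(* degree: number of edge-endpoints at w (a loop counts twice) *)
Definition deg (V : finType) (G : graph V) (w : V) : nat :=
  count (fun e => e.1 == w) G + count (fun e => e.2 == w) G.

Definition multiloop (V : finType) (G : graph V) : Prop :=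
  forall a b, a != b -> emult G a b <= 1.

(* H arises from G by one double edge swap (u,v),(x,y) ~> (u,x),(v,y);
   the other pairing is covered by choosing the representative (v,u). *)
Definition dswap (V : finType) (G H : graph V) : Prop :=
  exists u v x y (rest : graph V),
    geq G ((u, v) :: (x, y) :: rest) /\ geq H ((u, x) :: (v, y) :: rest).

Definition admissible_step (V : finType) (k : V -> nat) (G H : graph V) : Prop :=
  dswap G H /\ multiloop H /\ (forall w, deg H w = k w).

(* Main.v *)
Require Import Defs.
From Stdlib Require Import Relations Classical.
From Stdlib Require Import Lia.
From mathcomp Require Import all_boot zify.
Set Implicit Arguments. Unset Strict Implicit. Unset Printing Implicit Defensive.

Definition pm (V : finType) (x y a b : V) : bool := ((x,y) == (a,b)) || ((x,y) == (b,a)).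

Lemma emult_cons (V : finType) (x y : V) (L : graph V) a b :
  emult ((x,y)::L) a b = pm x y a b + emult L a b.
Proof. by []. Qed.

Lemma pmC (V : finType) (x y a b : V) : pm y x a b = pm x y a b.
Proof. rewrite /pm !xpair_eqE; by case: (x == a); case: (y == b); case: (x==b); case: (y==a). Qed.

Lemma pm_sym (V : finType) (x y a b : V) : pm x y b a = pm x y a b.
Proof. by rewrite /pm orbC. Qed.

Lemma emult_sym (V : finType) (G : graph V) a b : emult G a b = emult G b a.
Proof. by apply: eq_count => e; rewrite orbC. Qed.

Lemma sum_eq1 (V : finType) (c w : V) :
  \sum_(x | x != w) ((c == x) : nat) = (c != w).
Proof.
case: (boolP (c == w)) => [/eqP-> | cw] /=.
  by rewrite big1 // => x xw; rewrite eq_sym (negbTE xw).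
rewrite (bigD1 c) //= eqxx big1 // => x /andP[_ xc]; by rewrite eq_sym (negbTE xc).
Qed.

Lemma degE (V : finType) (G : graph V) w :
  deg G w = 2 * emult G w w + \sum_(x | x != w) emult G w x.
Proof.
elim: G => [|[a b] G IH].
  by rewrite /deg /emult /= big1.
have -> : deg ((a, b) :: G) w = (a == w) + (b == w) + deg G w.
  rewrite /deg /=; lia.
rewrite IH emult_cons.
have E : \sum_(x | x != w) emult ((a,b)::G) w x = \sum_(x | x != w) pm a b w x + \sum_(x | x != w) emult G w x.
  by rewrite -big_split; apply: eq_bigr => x _; rewrite emult_cons.
rewrite E.
suff : (a == w) + (b == w) = 2 * pm a b w w + \sum_(i | i != w) pm a b w i by lia.
rewrite /pm.
under eq_bigr => x _ do rewrite !xpair_eqE.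
rewrite !xpair_eqE orbb.
case: (boolP (a == w)) => [/eqP-> | aw]; case: (boolP (b == w)) => [/eqP-> | bw] /=.
- by rewrite big1 // => x xw; rewrite eq_sym (negbTE xw).
- under eq_bigr => x _ do rewrite andbF orbF.
  by rewrite sum_eq1 bw.
- under eq_bigr => x _ do rewrite andbT.
  by rewrite sum_eq1 aw.
- by rewrite big1 // => x xw; rewrite andbF.
Qed.

Lemma geq_trans (V : finType) (G H K : graph V) : Defs.geq G H -> Defs.geq H K -> Defs.geq G K.
Proof. by move=> h1 h2 a b; rewrite h1 h2. Qed.

Lemma deg_geq (V : finType) (G H : graph V) w : Defs.geq G H -> deg G w = deg H w.
Proof. by move=> h; rewrite !degE h; congr (_ + _); apply: eq_bigr => x _; rewrite h. Qed.

Lemma ex_rem (V : finType) (G : graph V) a b :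
  0 < emult G a b -> exists R, Defs.geq G ((a,b)::R).
Proof.
move=> h.
have : has (fun e => (e == (a,b)) || (e == (b,a))) G by rewrite has_count.
case/hasP => e eG He.
exists (rem e G) => x y.
have -> : emult G x y = emult (e :: rem e G) x y.
  by rewrite /emult; apply/permP; exact: perm_to_rem.
case/orP: He => /eqP ->; rewrite !emult_cons //.
by rewrite pmC.
Qed.

Lemma pm_trans (V : finType) (x y z t a b : V) : pm x y a b -> pm z t a b -> pm x y z t.
Proof.
rewrite /pm !xpair_eqE.
by case/orP => /andP[/eqP-> /eqP->]; case/orP => /andP[/eqP-> /eqP->]; rewrite !eqxx ?orbT.
Qed.

Lemma pm_neq (V : finType) (x y a b : V) : pm x y a b -> a != b -> x != y.
Proof.
rewrite /pm !xpair_eqE.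
by case/orP => /andP[/eqP-> /eqP->] //; rewrite eq_sym.
Qed.

Lemma pm_emult (V : finType) (G : graph V) (x y a b : V) : pm x y a b -> emult G x y = emult G a b.
Proof.
rewrite /pm !xpair_eqE.
by case/orP => /andP[/eqP-> /eqP->] //; rewrite emult_sym.
Qed.

Lemma swap_step (V : finType) (k : V -> nat) (G : graph V) p q r s :
  multiloop G -> (forall w, deg G w = k w) ->
  0 < emult G p q -> 0 < emult G r s -> ~~ pm p q r s ->
  (p != r -> emult G p r = 0) -> (q != s -> emult G q s = 0) ->
  (p != r -> q != s -> ~~ pm p r q s) ->
  exists H, admissible_step k G H /\
    (forall a b, emult H a b + pm p q a b + pm r s a b = emult G a b + pm p r a b + pm q s a b).
Proof.
move=> mG dG h1 h2 h3 h4 h5 h6.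
have [R1 E1] := ex_rem h1.
have h2' : 0 < emult R1 r s by move: h2; rewrite E1 emult_cons (negbTE h3).
have [R2 E2] := ex_rem h2'.
have E : Defs.geq G ((p,q)::(r,s)::R2) by move=> x y; rewrite E1 !emult_cons E2 emult_cons.
exists ((p,r)::(q,s)::R2).
have eqH : forall a b, emult ((p,r)::(q,s)::R2) a b + pm p q a b + pm r s a b
   = emult G a b + pm p r a b + pm q s a b.
  by move=> a b; rewrite E !emult_cons; lia.
split; last exact eqH.
split; first by exists p, q, r, s, R2.
split.
- move=> a b ab.
  have := mG a b ab; rewrite E !emult_cons.
  case Hpr: (pm p r a b); case Hqs: (pm q s a b) => /=.
  + have := h6 (pm_neq Hpr ab) (pm_neq Hqs ab).
    by rewrite (pm_trans Hpr Hqs).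
  + have := h4 (pm_neq Hpr ab); rewrite (pm_emult G Hpr) E !emult_cons.
    lia.
  + have := h5 (pm_neq Hqs ab); rewrite (pm_emult G Hqs) E !emult_cons.
    lia.
  + lia.
- move=> w; rewrite -dG (deg_geq w E) /deg /=; lia.
Qed.

Definition mu (V : finType) (G : graph V) := \sum_w emult G w w.

Lemma sum_pm (V : finType) (x y : V) : \sum_w (pm x y w w : nat) = (x == y).
Proof.
rewrite /pm.
under eq_bigr => w _ do rewrite !xpair_eqE orbb.
case: (boolP (x == y)) => [/eqP <- | xy].
  rewrite (bigD1 x) //= eqxx big1 // => w /negbTE; rewrite eq_sym => ->; done.
rewrite big1 // => w _.
case: (boolP (x == w)) => [/eqP xw|] //=; case: (boolP (y == w)) => [/eqP yw|] //=.
by move: xy; rewrite xw yw eqxx.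
Qed.

Lemma mu_step (V : finType) (G H : graph V) p q r s :
  (forall a b, emult H a b + pm p q a b + pm r s a b = emult G a b + pm p r a b + pm q s a b) ->
  mu H + (p == q) + (r == s) = mu G + (p == r) + (q == s).
Proof.
move=> e.
have : \sum_w (emult H w w + pm p q w w + pm r s w w) =
        \sum_w (emult G w w + pm p r w w + pm q s w w).
  by apply: eq_bigr => w _; exact: e.
by rewrite !big_split /= !sum_pm.
Qed.

Lemma sum_pos (V : finType) (P : pred V) (f : V -> nat) :
  0 < \sum_(x | P x) f x -> exists2 x, P x & 0 < f x.
Proof.
move=> h.
case: (pickP (fun x => P x && (0 < f x))) => [x /andP[Px fx] | none].
  by exists x.
move: h; rewrite big1 // => x Px.
by have := none x; rewrite Px /= lt0n => /negbFE/eqP.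
Qed.

Lemma two_pos (V : finType) (f : V -> nat) (w : V) :
  (forall x, x != w -> f x <= 1) -> 2 <= \sum_(x | x != w) f x ->
  exists v x, [/\ v != w, x != w, v != x, 0 < f v & 0 < f x].
Proof.
move=> h1 h2.
have [v vw fv] := @sum_pos V _ f (leq_trans (isT : 0 < 2) h2).
move: h2; rewrite (bigD1 v) //= => h2.
have h3 : 0 < \sum_(i | (i != w) && (i != v)) f i.
  have := h1 v vw; lia.
have [x /andP[xw xv] fx] := sum_pos h3.
exists v, x; split => //; by rewrite eq_sym.
Qed.

Lemma sum_two (V : finType) (f : V -> nat) y y1 y2 :
  y1 != y -> y2 != y -> y1 != y2 -> f y1 = 1 -> f y2 = 1 ->
  (forall x, x != y -> x != y1 -> x != y2 -> f x = 0) ->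
  \sum_(x | x != y) f x = 2.
Proof.
move=> h1 h2 h3 f1 f2 h.
rewrite (bigD1 y1) // (bigD1 y2) /=; last by rewrite h2 eq_sym h3.
rewrite big1 ?f1 ?f2 // => x /andP[/andP[xy xy1] xy2].
exact: h.
Qed.

Lemma sum_all1 (V : finType) (f : V -> nat) y :
  (forall x, x != y -> f x = 1) -> \sum_(x | x != y) f x = #|V|.-1.
Proof.
move=> h.
rewrite (eq_bigr (fun=> 1)) //.
rewrite sum1_card -(cardC1 y).
by apply: eq_card => x.
Qed.

Ltac neqsimp := repeat (match goal with
 | H : is_true (?a != ?b) |- context [?a == ?b] => rewrite (negbTE H)
 | H : is_true (?a != ?b) |- context [?b == ?a] => rewrite [b == a]eq_sym (negbTE H)
 end); rewrite ?eqxx /= ?andbF ?andbT ?orbF ?orbT /=.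
Ltac pmsimp := rewrite /pm !xpair_eqE; neqsimp.

Ltac glia := let e := fresh "e" in move=> e; clear -e; lia.
Ltac glia2 := let e := fresh "e" in let f := fresh "f" in move=> e f; clear -e f; lia.

Lemma progress (V : finType) (k : V -> nat) (hpos : forall u, 1 <= k u)
  (hodd : exists u, odd (k u))
  (hv : exists v, (k v < #|V|.-1) || odd (k v - #|V|.-1))
  (G : graph V) (hG : multiloop G) (hdeg : forall u, deg G u = k u)
  (u : V) (hu : emult G u u != (k u)./2) :
  exists H, clos_refl_trans (graph V) (admissible_step k) G H /\ multiloop H /\
    (forall w, deg H w = k w) /\ mu G < mu H.
Proof.
have kE : forall y, k y = 2 * emult G y y + \sum_(x | x != y) emult G y x.
  by move=> y; rewrite -hdeg degE.
have le1 : forall a b, a != b -> emult G a b <= 1 by [].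
have [v [w [vu wu vw pv pw]]] : exists v x, [/\ v != u, x != u, v != x,
    0 < emult G u v & 0 < emult G u x].
  apply: two_pos.
    by move=> x xu; apply: hG; rewrite eq_sym.
  have := kE u; move: hu; glia2.
case: (classic (exists a b c, [/\ a != b, a != c, b != c & [/\ 0 < emult G a b,
    0 < emult G a c & emult G b c = 0]])) => [[a [b [c [ab ac bc [pab pac ebc]]]]] | n1].
  have [H [st E]] := @swap_step V k G a b a c hG hdeg pab pac
     ltac:(by pmsimp) ltac:(by rewrite eqxx) (fun _ => ebc) ltac:(by rewrite eqxx).
  exists H; split; first exact: rt_step.
  case: st => _ [mH dH]; split => //; split => //.
  have := mu_step E; rewrite eqxx (negbTE ab) (negbTE ac) (negbTE bc); glia.
have cl : forall a b c, a != b -> a != c -> b != c -> 0 < emult G a b ->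
    0 < emult G a c -> 0 < emult G b c.
  move=> a b c ab ac bc pab pac; rewrite lt0n; apply/negP => /eqP h.
  by apply: n1; exists a, b, c; split => //; split.
pose C := fun x => (x == u) || (0 < emult G u x).
have Cu : C u by rewrite /C /= eqxx.
have Cv : C v by rewrite /C /= pv orbT.
have Cw : C w by rewrite /C /= pw orbT.
have closed : forall x y, x != y -> 0 < emult G y x -> C y -> C x.
  move=> x y xy pyx; rewrite /C /= => /orP[/eqP yu | puy].
    by rewrite -yu pyx orbT.
  case: (boolP (x == u)) => //= xu.
  case: (boolP (y == u)) => [/eqP yu | yu]; first by rewrite -yu.
  apply: (cl y) => //; rewrite 1?eq_sym // emult_sym //.
have clique : forall a b, a != b -> C a -> C b -> 0 < emult G a b.
  move=> a b ab; rewrite /C /= => /orP[/eqP ea | pua] /orP[/eqP eb | pub].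
  - by move: ab; rewrite ea eb eqxx.
  - by rewrite ea.
  - by rewrite eb emult_sym.
  case: (boolP (a == u)) => [/eqP ea | au]; first by rewrite ea.
  case: (boolP (b == u)) => [/eqP eb | bu]; first by rewrite eb emult_sym.
  by apply: (cl u) => //; rewrite eq_sym.
have nC : forall x y, ~~ C x -> C y -> emult G y x = 0.
  move=> x y nx cy; apply/eqP; rewrite -leqn0 leqNgt; apply/negP => h.
  have xy : x != y by apply/negP => /eqP e; move: nx; rewrite e cy.
  by move: nx; rewrite (closed x y xy h cy).
have nC' : forall x y, ~~ C x -> C y -> emult G x y = 0.
  by move=> x y nx cy; rewrite emult_sym; apply: nC.
have CneqC : forall x y, ~~ C x -> C y -> x != y.
  by move=> x y nx cy; apply/negP => /eqP e; move: nx; rewrite e cy.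
case: (classic (exists o p, [/\ o != p, 0 < emult G o p & ~~ C o])) =>
    [[o [p [op pop nCo]]] | n2].
  have nCp : ~~ C p.
    apply/negP => cp; move: nCo; rewrite (closed o p op) //.
    by rewrite emult_sym.
  have uo := CneqC _ _ nCo Cu; have vo := CneqC _ _ nCo Cv; have wo := CneqC _ _ nCo Cw.
  have up := CneqC _ _ nCp Cu; have vp := CneqC _ _ nCp Cv; have wp := CneqC _ _ nCp Cw.
  rewrite eq_sym in uo vo wo up vp wp.
  have uv : u != v by rewrite eq_sym.
  have uw : u != w by rewrite eq_sym.
  have [H1 [st1 E1]] := @swap_step V k G u v o p hG hdeg pv pop
     ltac:(by pmsimp) (fun _ => nC _ _ nCo Cu) (fun _ => nC _ _ nCp Cv)
     ltac:(by move=> _ _; pmsimp).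
  case: (st1) => _ [mH1 dH1].
  have h1 : 0 < emult H1 u o by move: (E1 u o); pmsimp; glia.
  have h2 : 0 < emult H1 u w by move: pw (E1 u w); pmsimp; glia2.
  have h3 : emult H1 o w = 0.
    by move: (E1 o w); rewrite (nC' _ _ nCo Cw); pmsimp; glia.
  have [H2 [st2 E2]] := @swap_step V k H1 u o u w mH1 dH1 h1 h2
     ltac:(by pmsimp) ltac:(by rewrite eqxx) (fun _ => h3) ltac:(by rewrite eqxx).
  case: (st2) => _ [mH2 dH2].
  exists H2; split; first exact: (rt_trans _ _ _ H1 _ (rt_step _ _ _ _ st1) (rt_step _ _ _ _ st2)).
  split => //; split => //.
  have := mu_step E1; have := mu_step E2.
  neqsimp.
  glia2.
have n2' : forall o p, o != p -> 0 < emult G o p -> C o.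
  move=> o p op pop; apply/negPn/negP => nCo.
  by apply: n2; exists o, p; split.
have isoC : forall z, ~~ C z -> forall x, x != z -> emult G z x = 0.
  move=> z nCz x xz; apply/eqP; rewrite -leqn0 leqNgt; apply/negP => h.
  by move: nCz; rewrite (n2' z x) // eq_sym.
case: (classic (exists z, ~~ C z)) => [[z nCz] | n3].
  have iso := isoC z nCz.
  have dz : \sum_(x | x != z) emult G z x = 0 by rewrite big1.
  have pz : 0 < emult G z z by move: (kE z) (hpos z); rewrite dz; glia2.
  case: (classic (exists t, [/\ C t, t != u, t != v & t != w])) => [[t [Ct tu tv tw]] | n4].
    have zu := CneqC _ _ nCz Cu; have zv := CneqC _ _ nCz Cv.
    have zw := CneqC _ _ nCz Cw; have zt := CneqC _ _ nCz Ct.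
    have uz : u != z by rewrite eq_sym.
    have vz : v != z by rewrite eq_sym.
    have wz : w != z by rewrite eq_sym.
    have tz : t != z by rewrite eq_sym.
    have uv : u != v by rewrite eq_sym.
    have uw : u != w by rewrite eq_sym.
    have ut : u != t by rewrite eq_sym.
    have vt : v != t by rewrite eq_sym.
    have wt : w != t by rewrite eq_sym.
    have pvt : 0 < emult G v t := clique v t vt Cv Ct.
    have [H1 [st1 E1]] := @swap_step V k G z z u v hG hdeg pz pv
       ltac:(by pmsimp) (fun _ => iso u uz) (fun _ => iso v vz)
       ltac:(by move=> _ _; pmsimp).
    case: (st1) => _ [mH1 dH1].
    have h1 : 0 < emult H1 u z by move: (E1 u z); pmsimp; glia.
    have h2 : 0 < emult H1 u w by move: pw (E1 u w); pmsimp; glia2.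
    have h3 : emult H1 z w = 0 by move: (E1 z w); rewrite (iso w wz); pmsimp; glia.
    have h4 : 0 < emult H1 v z by move: (E1 v z); pmsimp; glia.
    have h5 : 0 < emult H1 v t by move: pvt (E1 v t); pmsimp; glia2.
    have h6 : emult H1 z t = 0 by move: (E1 z t); rewrite (iso t tz); pmsimp; glia.
    have [H2 [st2 E2]] := @swap_step V k H1 u z u w mH1 dH1 h1 h2
       ltac:(by pmsimp) ltac:(by rewrite eqxx) (fun _ => h3) ltac:(by rewrite eqxx).
    case: (st2) => _ [mH2 dH2].
    have g4 : 0 < emult H2 v z by move: h4 (E2 v z); pmsimp; glia2.
    have g5 : 0 < emult H2 v t by move: h5 (E2 v t); pmsimp; glia2.
    have g6 : emult H2 z t = 0 by move: h6 (E2 z t); pmsimp; glia2.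
    have [H3 [st3 E3]] := @swap_step V k H2 v z v t mH2 dH2 g4 g5
       ltac:(by pmsimp) ltac:(by rewrite eqxx) (fun _ => g6) ltac:(by rewrite eqxx).
    case: (st3) => _ [mH3 dH3].
    exists H3; split.
      apply: (rt_trans _ _ _ H2); last exact: rt_step.
      apply: (rt_trans _ _ _ H1); exact: rt_step.
    split => //; split => //.
    have := mu_step E1; have := mu_step E2; have := mu_step E3; neqsimp.
    let e1 := fresh in let e2 := fresh in let e3 := fresh in
      move=> e1 e2 e3; clear -e1 e2 e3; lia.
  have hC3 : forall t, C t -> [|| t == u, t == v | t == w].
    move=> t Ct; apply/negPn/negP; rewrite !negb_or => /and3P[a b c].
    by apply: n4; exists t; split.
  have tri : forall y y1 y2, C y -> C y1 -> C y2 -> y1 != y -> y2 != y -> y1 != y2 ->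
      (forall x, C x -> [|| x == y, x == y1 | x == y2]) -> ~~ odd (k y).
    move=> y y1 y2 cy c1 c2 h1 h2 h3 hc.
    rewrite (kE y) (@sum_two V (emult G y) y y1 y2) //.
    - have : ~~ odd (2 * (emult G y y + 1)) by rewrite oddM.
      by rewrite mulnDr muln1.
    - have := clique y y1 ltac:(by rewrite // eq_sym) cy c1.
      have := hG y y1 ltac:(by rewrite // eq_sym); glia2.
    - have := clique y y2 ltac:(by rewrite // eq_sym) cy c2.
      have := hG y y2 ltac:(by rewrite // eq_sym); glia2.
    - move=> x xy xy1 xy2; apply/eqP; rewrite -leqn0 leqNgt; apply/negP => h.
      have := hc x (closed x y xy h cy).
      by rewrite (negbTE xy) (negbTE xy1) (negbTE xy2).
  have [o ko] := hodd.
  case: (boolP (C o)) => Co.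
    have := hC3 o Co; case/or3P => /eqP e; rewrite e in ko.
    - by have := tri u v w Cu Cv Cw vu wu vw hC3; rewrite ko.
    - have := tri v u w Cv Cu Cw ltac:(by rewrite // eq_sym) ltac:(by rewrite // eq_sym)
         ltac:(by rewrite // eq_sym).
      rewrite ko => hh; have : ~~ true; last by [].
      apply: hh => x cx; move: (hC3 x cx).
      by case/or3P => ->; rewrite ?orbT.
    - have := tri w u v Cw Cu Cv ltac:(by rewrite // eq_sym) ltac:(by rewrite // eq_sym)
         ltac:(by rewrite // eq_sym).
      rewrite ko => hh; have : ~~ true; last by [].
      apply: hh => x cx; move: (hC3 x cx).
      by case/or3P => ->; rewrite ?orbT.
  move: ko; rewrite (kE o) big1 ?addn0 ?oddM // => x xo.
  exact: isoC.
have n3' : forall z, C z by move=> z; apply/negPn/negP => h; apply: n3; exists z.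
have all1 : forall y x, x != y -> emult G y x = 1.
  move=> y x xy.
  have := clique y x ltac:(by rewrite // eq_sym) (n3' y) (n3' x).
  have := hG y x ltac:(by rewrite // eq_sym); glia2.
have [x0 hx] := hv.
move: hx; rewrite (kE x0) (sum_all1 (all1 x0)) addnK oddM /= orbF.
by rewrite ltnNge leq_addl.
Qed.

Lemma loop_le (V : finType) (k : V -> nat) (G : graph V) (hdeg : forall u, deg G u = k u) w :
  emult G w w <= (k w)./2.
Proof. have := degE G w; rewrite hdeg; glia. Qed.

Theorem mainTheorem3 (V : finType) (k : V -> nat)
  (hpos : forall u, 1 <= k u)
  (hodd : exists u, odd (k u))
  (hv : exists v, (k v < #|V|.-1) || odd (k v - #|V|.-1))
  (G : graph V) (hG : multiloop G) (hdeg : forall u, deg G u = k u) :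
  exists H : graph V,
    clos_refl_trans (graph V) (admissible_step k) G H /\
    (forall u, emult H u u = (k u)./2).
Proof.
pose N := \sum_w (k w)./2.
have muN : forall G' : graph V, (forall u, deg G' u = k u) -> mu G' <= N.
  by move=> G' d; apply: leq_sum => w _; apply: loop_le.
suff : forall n (G' : graph V), N - mu G' <= n -> multiloop G' -> (forall u, deg G' u = k u) ->
  exists H : graph V, clos_refl_trans (graph V) (admissible_step k) G' H /\
    (forall u, emult H u u = (k u)./2).
  by move=> h; exact: (h _ G (leqnn _) hG hdeg).
elim => [|n IH] G' hn mG' dG';
  (case: (classic (forall u, emult G' u u = (k u)./2)) => [all | nall];
   [by exists G'; split => //; apply: rt_refl | ]);
  have [u hu] := not_all_ex_not _ _ nall;
  have [G2 [st [m2 [d2 lt2]]]] := progress hpos hodd hv mG' dG' (introN eqP hu);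
  have := muN G2 d2.
- move: hn lt2; glia2.
- move=> le2.
  have [H [st2 eH]] := IH G2 ltac:(clear -hn lt2 le2; lia) m2 d2.
  by exists H; split => //; apply: (rt_trans _ _ _ G2).
Qed.
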